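(* Let $p_1,p_2\ge 5$ be distinct primes, $e_i=\zeta_{p_1}^i+\zeta_{p_1}^{-i}$, $b_j=\zeta_{p_2}^j+\zeta_{p_2}^{-j}$, $n_1=\frac{p_1-1}{2}$, $n_2=\frac{p_2-1}{2}$, and $\mathbb{K}=\mathbb{Q}(\zeta_{p_1}+\zeta_{p_1}^{-1})\mathbb{Q}(\zeta_{p_2}+\zeta_{p_2}^{-1})$. Let $\mathcal{I}\subseteq\mathcal{O}_{\mathbb{K}}$ be the $\mathbb{Z}$-module with $\mathbb{Z}$-basis consisting of all products $e_ib_j$ ($1\le i\le n_1$, $1\le j\le n_2$) except that $e_{n_1}b_{n_2}$ is replaced by $2e_{n_1}b_{n_2}$. Then $\mathcal{I}$ is not an ideal of $\mathcal{O}_{\mathbb{K}}$.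
   Context: $\zeta_m=e^{2\pi i/m}$. *)

(* Defs.v *)
From HB Require Import structures.
From mathcomp Require Import all_boot all_order all_algebra all_field.
Set Implicit Arguments. Unset Strict Implicit. Unset Printing Implicit Defensive.
Import Order.TTheory GRing.Theory Num.Theory.
Local Open Scope ring_scope.

(* zeta m = e^{2 pi i / m}: m.-root (-1) is the m-th root of -1 of minimal
   non-negative argument, i.e. e^{i pi / m}; its square is e^{2 pi i / m}. *)
Definition zeta (m : nat) : algC := (m.-root (-1)) ^+ 2.

Definition cosz (m k : nat) : algC := zeta m ^+ k + (zeta m)^-1 ^+ k.

Inductive gen_field (x y : algC) : algC -> Prop :=
| gf_rat (q : rat) : gen_field x y (ratr q)
| gf_x : gen_field x y x
| gf_y : gen_field x y y
| gf_add a b : gen_field x y a -> gen_field x y b -> gen_field x y (a + b)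
| gf_opp a : gen_field x y a -> gen_field x y (- a)
| gf_mul a b : gen_field x y a -> gen_field x y b -> gen_field x y (a * b)
| gf_inv a : gen_field x y a -> gen_field x y (a^-1).

Definition inK (p1 p2 : nat) (x : algC) : Prop :=
  gen_field (cosz p1 1) (cosz p2 1) x.

Definition inOK (p1 p2 : nat) (x : algC) : Prop := inK p1 p2 x /\ x \in Aint.

Definition genI (p1 p2 i j : nat) : algC :=
  let n1 := ((p1 - 1) %/ 2)%N in let n2 := ((p2 - 1) %/ 2)%N in
  (if (i == n1) && (j == n2) then 2 else 1) * (cosz p1 i * cosz p2 j).

Definition inI (p1 p2 : nat) (x : algC) : Prop :=
  exists c : nat -> nat -> int,
    x = \sum_(1 <= i < (((p1 - 1) %/ 2)%N).+1) \sum_(1 <= j < (((p2 - 1) %/ 2)%N).+1)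
          (c i j)%:~R * genI p1 p2 i j.

Definition is_ideal_of (O S : algC -> Prop) : Prop :=
  (forall x, S x -> O x) /\ S 0 /\
  (forall x y, S x -> S y -> S (x + y)) /\
  (forall r x, O r -> S x -> S (r * x)).

(* Main.v *)
Require Import Defs.
From HB Require Import structures.
From mathcomp Require Import all_boot all_order all_algebra all_field.
From mathcomp Require Import zify ring lra.
Set Implicit Arguments. Unset Strict Implicit. Unset Printing Implicit Defensive.
Import Order.TTheory GRing.Theory Num.Theory.
Local Open Scope ring_scope.

Section Z.
Variable p : nat.
Hypothesis pp : prime p.
Let w := zeta p.

Lemma p_gt1 : (1 < p)%N. Proof. exact: prime_gt1. Qed.

Lemma w_p : w ^+ p = 1.
Proof. by rewrite /w /zeta exprAC rootCK ?sqrrN ?expr1n // ltnW // p_gt1. Qed.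

Lemma w_neq1 : w != 1.
Proof.
apply/eqP=> h; move: h; rewrite /w /zeta.
set r := p.-root (-1) => r2.
have rp : r ^+ p = -1 by rewrite rootCK // ltnW // p_gt1.
have e : (r - 1) * (r + 1) = r ^+ 2 - 1 by ring.
have : (r - 1) * (r + 1) == 0 by rewrite e r2 subrr.
rewrite mulf_eq0 subr_eq0 addr_eq0 => /orP [/eqP r1| /eqP rN1].
  by move: rp; rewrite r1 expr1n => /eqP; rewrite -subr_eq0 opprK -(natrD _ 1 1) pnatr_eq0.
have := rootC_lt0 (-1 : algC) p_gt1; rewrite -/r rN1 ltrN10 //.
Qed.

Lemma w_prim : p.-primitive_root w.
Proof.
have [m pm dm] := prim_order_exists (ltnW p_gt1) w_p.
have /orP [/eqP m1|/eqP mp] := (primeP pp).2 m dm.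
  by move: w_neq1; rewrite m1 in pm; rewrite -[w]expr1 (prim_expr_order pm) eqxx.
by rewrite -mp.
Qed.

Lemma w_neq0 : w != 0.
Proof. by rewrite (prim_root_eq0 w_prim) -lt0n ltnW // p_gt1. Qed.

Lemma wz_neq1 (z : int) : z != 0 -> (`|z| < p)%N -> w ^ z != 1.
Proof.
have wn : forall n : nat, (0 < n < p)%N -> w ^+ n != 1.
  move=> n /andP [n0 np]; rewrite -(expr0 w) (eq_prim_root_expr w_prim) mod0n modn_small //.
  by rewrite -lt0n.
case: z => n.
  rewrite /= => n0 np; apply: wn; rewrite np andbT lt0n; apply: contra n0 => /eqP ->//.
move=> _ np /=; rewrite invr_eq1; apply: wn; by [].
Qed.

Definition E (z : int) := w ^ z + w ^ (- z).
Definition Tr (z : int) := \sum_(1 <= k < p) E (k%:Z * z).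

Lemma Ssum (z : int) : z != 0 -> (`|z| < p)%N ->
  \sum_(1 <= k < p) w ^ (k%:Z * z) = -1.
Proof.
move=> z0 zp; set x := w ^ z.
have xp : x ^+ p = 1.
  change ((w ^ z) ^ (p%:Z) = 1); rewrite exprzAC.
  change ((w ^+ p) ^ z = 1); rewrite w_p exp1rz //.
have x1 : x != 1 := wz_neq1 z0 zp.
have : \sum_(0 <= k < p) x ^+ k = 0.
  rewrite big_mkord; apply/eqP; have := subrX1 x p.
  rewrite xp subrr => /esym/eqP; rewrite mulf_eq0 subr_eq0 (negbTE x1) //.
rewrite big_ltn ?(ltnW p_gt1) // expr0 => /eqP; rewrite addrC addr_eq0 => /eqP <-.
apply: eq_bigr => k _; by rewrite mulrC -exprz_exp.
Qed.

Lemma TrN (z : int) : z != 0 -> (`|z| < p)%N -> Tr z = -2.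
Proof.
move=> z0 zp; rewrite /Tr /E big_split /= Ssum //.
rewrite (eq_bigr (fun k : nat => w ^ (k%:Z * (- z)))); last by move=> k _; rewrite mulrN.
rewrite Ssum ?oppr_eq0 ?abszN //. by rewrite -opprD.
Qed.

Lemma intrPosz (n : nat) : (n%:Z)%:~R = n%:R :> algC. Proof. by []. Qed.

Lemma Tr0 : Tr 0 = ((p%:Z - 1) * 2)%:~R.
Proof.
rewrite /Tr /E (eq_bigr (fun _ => 2)); last by move=> k _; rewrite mulr0 oppr0 expr0z.
rewrite big_const_nat iter_addr addr0.
have -> : (p%:Z - 1) = (p - 1)%N%:Z by rewrite subzn // ltnW // p_gt1.
rewrite rmorphM /= !intrPosz; ring.
Qed.

Lemma EM a b : E a * E b = E (a + b) + E (a - b).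
Proof.
rewrite /E !expfzDr ?w_neq0 // !opprD !expfzDr ?w_neq0 // opprK; ring.
Qed.

Lemma cosz_E (i : nat) : cosz p i = E i%:Z.
Proof. by rewrite /cosz /E -exprz_inv. Qed.

Lemma autE (u : {rmorphism algC -> algC}) (k : nat) (z : int) :
  u w = w ^+ k -> u (E z) = E (k%:Z * z).
Proof.
move=> uw; rewrite /E rmorphD !fmorphXz uw.
change (w ^+ k) with (w ^ (k%:Z)); by rewrite !exprz_exp mulrN.
Qed.
End Z.



Lemma aut_ex (p1 p2 k1 k2 : nat) : prime p1 -> prime p2 -> p1 != p2 ->
  (0 < k1 < p1)%N -> (0 < k2 < p2)%N ->
  {u : {rmorphism algC -> algC} | u (zeta p1) = zeta p1 ^+ k1 /\ u (zeta p2) = zeta p2 ^+ k2}.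
Proof.
move=> pp1 pp2 p12 /andP [k10 k1p] /andP [k20 k2p].
have co : coprime p1 p2 by rewrite prime_coprime // dvdn_prime2 //.
set k := chinese p1 p2 k1 k2.
have m1 : (k %% p1)%N = k1 by rewrite /k chinese_modl // modn_small.
have m2 : (k %% p2)%N = k2 by rewrite /k chinese_modr // modn_small.
have ck : coprime k (p1 * p2)%N.
  rewrite coprimeMr -(div.coprime_modl k p1) -(div.coprime_modl k p2) m1 m2.
  by rewrite !(coprime_sym k1) !(coprime_sym k2) !prime_coprime // !gtnNdvd.
have [u hu] := Qn_aut_exists ck.
exists u; split.
  rewrite hu; last by rewrite exprM w_p // expr1n.
  by rewrite -(prim_expr_mod (w_prim pp1)) m1.
rewrite hu; last by rewrite mulnC exprM w_p // expr1n.
by rewrite -(prim_expr_mod (w_prim pp2)) m2.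
Qed.

Lemma sum_delta (m n a : nat) (F : nat -> algC) : (m <= a < n)%N ->
  \sum_(m <= i < n) (if i == a then F i else 0) = F a.
Proof.
move=> ha; rewrite (bigD1_seq a) ?mem_index_iota //= ?eqxx; last first.
  by rewrite /index_iota iota_uniq.
by rewrite big1 ?addr0 // => i /negbTE ->.
Qed.

Lemma inI_gen p1 p2 a b : (1 <= a <= (p1 - 1) %/ 2)%N -> (1 <= b <= (p2 - 1) %/ 2)%N ->
  inI p1 p2 (genI p1 p2 a b).
Proof.
move=> ha hb; exists (fun i j => if (i == a) && (j == b) then 1 else 0).
symmetry.
transitivity (\sum_(1 <= i < ((p1 - 1) %/ 2).+1) (if i == a then
   \sum_(1 <= j < ((p2 - 1) %/ 2).+1) (if j == b then genI p1 p2 a j else 0) else 0)).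
  apply: eq_bigr => i _; case: eqP => [->|_].
    by apply: eq_bigr => j _; case: eqP => _; rewrite ?mul1r ?mul0r.
  by rewrite big1 // => j _; rewrite mul0r.
by rewrite sum_delta ?ltnS // sum_delta ?ltnS.
Qed.

Section F.
Variable p : nat.
Hypothesis pp : prime p.
Hypothesis p5 : (5 <= p)%N.
Let n := ((p - 1) %/ 2)%N.

Lemma p_odd : p%:Z = 2 * n%:Z + 1.
Proof.
have [p2|op] := even_prime pp; first by have := p5; rewrite p2.
have := odd_double_half p; rewrite op /n => h.
have -> : (p - 1 = p./2.*2)%N by rewrite -{1}h addKn.
rewrite -muln2 mulnK //; lia.
Qed.

Lemma Fgen (i : nat) : (1 <= i <= n)%N ->
  Tr p (n%:Z + i%:Z) + Tr p (n%:Z - i%:Z) =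
  (if i == n then (p%:Z - 1) * 2 - 2 else -4)%:~R.
Proof.
move=> /andP [i1 i2]; have po := p_odd.
rewrite TrN //; last 2 first.
- lia.
- lia.
case: eqP => [->|ne].
  rewrite subrr Tr0 // rmorphB /=; ring.
rewrite TrN //; last 2 first.
- apply/eqP => h; apply: ne; lia.
- lia.
rewrite rmorphN /=; ring.
Qed.

Lemma Ftarget :
  (Tr p (n%:Z + n%:Z) + Tr p (n%:Z - n%:Z)) +
  (Tr p (n%:Z + (n%:Z - 2)) + Tr p (n%:Z - (n%:Z - 2))) =
  ((p%:Z - 1) * 2 - 6)%:~R.
Proof.
have po := p_odd.
rewrite subrr Tr0 // !TrN //; last 6 first.
- lia.
- lia.
- lia.
- lia.
- lia.
- lia.
rewrite rmorphB /=; ring.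
Qed.
End F.

Lemma sum_prod (f g : nat -> algC) m1 n1 m2 n2 :
  \sum_(m1 <= i < n1) \sum_(m2 <= j < n2) f i * g j =
  (\sum_(m1 <= i < n1) f i) * (\sum_(m2 <= j < n2) g j).
Proof. by rewrite mulr_suml; apply: eq_bigr => i _; rewrite mulr_sumr. Qed.

Theorem proposition3p8 (p1 p2 : nat) :
  prime p1 -> prime p2 -> (5 <= p1)%N -> (5 <= p2)%N -> p1 != p2 ->
  ~ is_ideal_of (inOK p1 p2) (inI p1 p2).
Proof.
move=> pp1 pp2 h1 h2 p12 [HO [H0 [Hadd Hmul]]].
set n1 := ((p1 - 1) %/ 2)%N; set n2 := ((p2 - 1) %/ 2)%N.
have po1 := p_odd pp1 h1; have po2 := p_odd pp2 h2.
rewrite -/n1 in po1; rewrite -/n2 in po2.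
have Hr : inI p1 p2 (genI p1 p2 (n1 - 1)%N (n2 - 1)%N) by apply: inI_gen; lia.
have Hx : inI p1 p2 (genI p1 p2 1 1) by apply: inI_gen; lia.
have [c Hc] := Hmul _ _ (HO _ Hr) Hx.
have H : forall k1 k2, {u : {rmorphism algC -> algC} | (0 < k1 < p1)%N -> (0 < k2 < p2)%N ->
   u (zeta p1) = zeta p1 ^+ k1 /\ u (zeta p2) = zeta p2 ^+ k2}.
  move=> k1 k2; case: (boolP ((0 < k1 < p1) && (0 < k2 < p2))%N) => [/andP[a b]|nb].
    by have [u hu] := aut_ex pp1 pp2 p12 a b; exists u.
  by have [u hu] := aut_ex (k1 := 1) (k2 := 1) pp1 pp2 p12 (prime_gt1 pp1) (prime_gt1 pp2); exists u => a b; rewrite a b in nb.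
pose s k1 k2 := sval (H k1 k2).
pose Z := cosz p1 n1 * cosz p2 n2.
pose T y := \sum_(1 <= k1 < p1) \sum_(1 <= k2 < p2) s k1 k2 (Z * y).
have TD : forall a b, T (a + b) = T a + T b.
  move=> a b; rewrite /T -big_split; apply: eq_bigr => k1 _.
  by rewrite -big_split; apply: eq_bigr => k2 _; rewrite mulrDr rmorphD.
have T0 : T 0 = 0.
  by rewrite /T big1 // => k1 _; rewrite big1 // => k2 _; rewrite mulr0 rmorph0.
have TZ : forall (z : int) y, T (z%:~R * y) = z%:~R * T y.
  move=> z y; rewrite /T mulr_sumr; apply: eq_bigr => k1 _.
  by rewrite mulr_sumr; apply: eq_bigr => k2 _; rewrite mulrCA rmorphM rmorph_int.
have Tprod : forall a b : int, T (E p1 a * E p2 b) =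
    (Tr p1 (n1%:Z + a) + Tr p1 (n1%:Z - a)) * (Tr p2 (n2%:Z + b) + Tr p2 (n2%:Z - b)).
  move=> a b.
  have -> : Tr p1 (n1%:Z + a) + Tr p1 (n1%:Z - a) =
      \sum_(1 <= k1 < p1) E p1 (k1%:Z * n1%:Z) * E p1 (k1%:Z * a).
    rewrite /Tr -big_split /=; apply: eq_bigr => k _; rewrite (EM pp1); congr (E p1 _ + E p1 _); ring.
  have -> : Tr p2 (n2%:Z + b) + Tr p2 (n2%:Z - b) =
      \sum_(1 <= k2 < p2) E p2 (k2%:Z * n2%:Z) * E p2 (k2%:Z * b).
    rewrite /Tr -big_split /=; apply: eq_bigr => k _; rewrite (EM pp2); congr (E p2 _ + E p2 _); ring.
  rewrite -sum_prod /T; apply: eq_big_nat => k1 hk1; apply: eq_big_nat => k2 hk2.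
  have [s1 s2] := svalP (H k1 k2) hk1 hk2.
  rewrite /Z !cosz_E.
  have -> : E p1 n1 * E p2 n2 * (E p1 a * E p2 b) =
     (E p1 n1 * E p1 a) * (E p2 n2 * E p2 b) by ring.
  by rewrite !rmorphM /= !(autE _ s1) !(autE _ s2).
pose M (i j : nat) : int := (if (i == n1) && (j == n2) then 2 else 1) *
   (if i == n1 then (p1%:Z - 1) * 2 - 2 else -4) *
   (if j == n2 then (p2%:Z - 1) * 2 - 2 else -4).
have Tg : forall i j, (1 <= i <= n1)%N -> (1 <= j <= n2)%N -> T (genI p1 p2 i j) = (M i j)%:~R.
  move=> i j hi hj; rewrite /genI -/n1 -/n2 !cosz_E.
  have -> : (if (i == n1) && (j == n2) then 2 else 1 : algC) =
     ((if (i == n1) && (j == n2) then 2 else 1 : int))%:~R by case: (_ && _).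
  by rewrite TZ Tprod (Fgen pp1 h1 hi) (Fgen pp2 h2 hj) /M !rmorphM /= mulrA.
have TR : T (\sum_(1 <= i < ((p1 - 1) %/ 2).+1)
       \sum_(1 <= j < ((p2 - 1) %/ 2).+1) (c i j)%:~R * genI p1 p2 i j) =
    (\sum_(1 <= i < n1.+1) \sum_(1 <= j < n2.+1) c i j * M i j)%:~R.
  rewrite (big_morph T TD T0) rmorph_sum; apply: eq_big_nat => i0 hi.
  rewrite (big_morph T TD T0) rmorph_sum; apply: eq_big_nat => j0 hj.
  rewrite TZ Tg ?rmorphM //; lia.
have K : forall a1 a2 b1 b2, T ((E p1 a1 + E p1 a2) * (E p2 b1 + E p2 b2)) =
   ((Tr p1 (n1%:Z + a1) + Tr p1 (n1%:Z - a1)) + (Tr p1 (n1%:Z + a2) + Tr p1 (n1%:Z - a2))) *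
   ((Tr p2 (n2%:Z + b1) + Tr p2 (n2%:Z - b1)) + (Tr p2 (n2%:Z + b2) + Tr p2 (n2%:Z - b2))).
  move=> a1 a2 b1 b2.
  have -> : (E p1 a1 + E p1 a2) * (E p2 b1 + E p2 b2) =
    E p1 a1 * E p2 b1 + E p1 a1 * E p2 b2 + (E p1 a2 * E p2 b1 + E p1 a2 * E p2 b2) by ring.
  rewrite !TD !Tprod; ring.
have TL : T (genI p1 p2 (n1 - 1)%N (n2 - 1)%N * genI p1 p2 1 1) =
    (((p1%:Z - 1) * 2 - 6) * ((p2%:Z - 1) * 2 - 6))%:~R.
  have -> : genI p1 p2 (n1 - 1)%N (n2 - 1)%N * genI p1 p2 1 1 =
      (E p1 (Posz (n1 - 1)%N) * E p1 1) * (E p2 (Posz (n2 - 1)%N) * E p2 1).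
    rewrite /genI -/n1 -/n2.
    have -> : ((n1 - 1)%N == n1) = false by apply/eqP; lia.
    have -> : (1 == n1) = false by apply/eqP; lia.
    rewrite /= !mul1r !cosz_E; ring.
  rewrite (EM pp1) (EM pp2).
  have e1 : (Posz (n1 - 1)%N) + 1 = n1%:Z by lia.
  have e2 : (Posz (n1 - 1)%N) - 1 = n1%:Z - 2 by lia.
  have e3 : (Posz (n2 - 1)%N) + 1 = n2%:Z by lia.
  have e4 : (Posz (n2 - 1)%N) - 1 = n2%:Z - 2 by lia.
  rewrite e1 e2 e3 e4 K (Ftarget pp1 h1) (Ftarget pp2 h2).
  by rewrite rmorphM.
have := congr1 T Hc; rewrite TL TR => /eqP; rewrite eqr_int => /eqP Heq.
have D : forall i j, (8 %| M i j)%Z.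
  move=> i j; rewrite /M; case: (i == n1); case: (j == n2); rewrite /=; apply/dvdzP.
  - by exists ((2 * n1%:Z - 1) * (2 * n2%:Z - 1)); rewrite po1 po2; ring.
  - by exists (1 - 2 * n1%:Z); rewrite po1; ring.
  - by exists (1 - 2 * n2%:Z); rewrite po2; ring.
  - by exists 2.
have : (\sum_(1 <= i < n1.+1) \sum_(1 <= j < n2.+1) c i j * M i j) =
   (\sum_(1 <= i < n1.+1) \sum_(1 <= j < n2.+1) c i j * (M i j %/ 8)%Z) * 8.
  rewrite mulr_suml; apply: eq_bigr => i _; rewrite mulr_suml; apply: eq_bigr => j _.
  by rewrite -mulrA divzK.
move: (\sum_(1 <= i < n1.+1) \sum_(1 <= j < n2.+1) c i j * (M i j %/ 8)%Z) => X.
rewrite -Heq po1 po2 => h.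
have : 16 * (n1%:Z * n2%:Z) - 24 * n1%:Z - 24 * n2%:Z + 36 = X * 8.
  by rewrite -h; ring.
lia.
Qed.
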